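(* Let $S$ be a polynomial ring over a field $k$, let $x$ be a variable of $S$, and let $R = S/(x)$, identified with the polynomial ring in the remaining variables. Let $I$ be a squarefree monomial ideal in $S$ and let $xF_1, \ldots, xF_n$ be the minimal monomial generators of $I$ divisible by $x$. Let $H = (I:x)/I$, regarded as an $R$-module, with generators the images of $F_1,\dots,F_n$. Let $N$ be the block diagonal matrix whose $i$-th block is the row matrix consisting of the minimal monomial generators of $I:F_i$ (over $R$), and let $P$ be the matrix whose columns are the minimal syzygies of the ideal $(F_1,\ldots,F_n)$ of $R$. Then the block matrix $M = (N \mid P)$ is a presentation matrix for $H$ (with respect to the surjection $R^n \to H$ sending the $i$-th basis vector to the class of $F_i$).
   Context: A presentation matrix for an $R$-module $H$ with respect to a surjection $R^n \to H$ is a matrix whose columns generate the kernel of that surjection. *)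

(* Defs.v *)
From HB Require Import structures.
From mathcomp Require Import all_boot all_order all_algebra.
From mathcomp Require Import mpoly.
Set Implicit Arguments. Unset Strict Implicit. Unset Printing Implicit Defensive.
Import GRing.Theory.
Local Open Scope ring_scope.

Section Defs.
Variables (k : fieldType) (m : nat).
Local Notation S := {mpoly k[m]}.

Definition in_ideal (G : seq S) (f : S) : Prop :=
  exists c : 'I_(size G) -> S, f = \sum_(i < size G) c i * G`_i.

Definition mon_ideal (gens : seq 'X_{1..m}) : S -> Prop :=
  in_ideal [seq ('X_[u] : S) | u <- gens].

Definition squarefree_mon (u : 'X_{1..m}) : Prop := forall i, (u i <= 1)%N.

Definition squarefree_gens (gens : seq 'X_{1..m}) : Prop :=
  forall u, u \in gens -> squarefree_mon u.

(* f lies in R = k[X_j : j <> x], i.e. no monomial of f involves the variable x. *)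
Definition in_R (x : 'I_m) (f : S) : Prop :=
  forall u, u \in msupp f -> u x = 0%N.

Definition colon (J : S -> Prop) (g : S) : S -> Prop := fun f => J (f * g).

(* Image in R = S/(x) (identified with k[X_j : j <> x]) of an ideal J of S:
   the elements of R congruent mod (x) to an element of J. *)
Definition image_mod_x (x : 'I_m) (J : S -> Prop) : S -> Prop :=
  fun f => in_R x f /\ exists g h : S, J g /\ f = g + h * 'X_x.

Definition min_mon_gen (J : S -> Prop) (u : 'X_{1..m}) : Prop :=
  J 'X_[u] /\ forall v : 'X_{1..m}, lem v u -> J 'X_[v] -> v = u.

Definition R_colspan (x : 'I_m) (n c : nat) (M : 'M[S]_(n, c)) (v : 'cV[S]_n) : Prop :=
  exists w : 'cV[S]_c, (forall j, in_R x (w j 0)) /\ v = M *m w.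

(* M (entries in R) is a presentation matrix of H = (I:x)/I with respect to the
   surjection R^n -> H, e_i |-> class of F_i: its columns generate (over R) the
   kernel of that map, i.e. the set of v in R^n with sum_i v_i F_i in I. *)
Definition presentation_matrix (x : 'I_m) (I : S -> Prop) (n c : nat)
    (F : 'I_n -> 'X_{1..m}) (M : 'M[S]_(n, c)) : Prop :=
  (forall i j, in_R x (M i j)) /\
  forall v : 'cV[S]_n, (forall i, in_R x (v i 0)) ->
    (I (\sum_i v i 0 * 'X_[F i]) <-> R_colspan x M v).

End Defs.

(* Main.v *)
Require Import Defs.
From HB Require Import structures.
From mathcomp Require Import all_boot all_order all_algebra.
From mathcomp Require Import mpoly.
From Stdlib Require Import Classical.
From mathcomp Require Import zify.
Import GRing.Theory.
Local Open Scope ring_scope.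

Module Aux.
Set Implicit Arguments.
Unset Strict Implicit.
Section Aux.
Variables (k : fieldType) (m : nat).
Local Notation S := {mpoly k[m]}.

Lemma inR0 (x : 'I_m) : in_R x (0 : S).
Proof. by move=> u; rewrite mcoeff_msupp raddf0 eqxx. Qed.

Lemma inRD (x : 'I_m) (f g : S) : in_R x f -> in_R x g -> in_R x (f + g).
Proof. by move=> hf hg u /msuppD_le; rewrite mem_cat => /orP[/hf|/hg]. Qed.

Lemma inRN (x : 'I_m) (f : S) : in_R x f -> in_R x (- f).
Proof. by move=> hf u; rewrite (perm_mem (msuppN f)); apply: hf. Qed.

Lemma inRM (x : 'I_m) (f g : S) : in_R x f -> in_R x g -> in_R x (f * g).
Proof.
move=> hf hg u /msuppM_le /allpairsP [[u1 u2]] /= [h1 h2 ->].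
by rewrite mnmDE (hf _ h1) (hg _ h2).
Qed.

Lemma inRZ (x : 'I_m) c (f : S) : in_R x f -> in_R x (c *: f).
Proof. by move=> hf u /msuppZ_le; apply: hf. Qed.

Lemma inRX (x : 'I_m) (b : 'X_{1..m}) : b x = 0%N -> in_R x ('X_[b] : S).
Proof. by move=> hb u; rewrite msuppX mem_seq1 => /eqP ->. Qed.

Lemma inRnat (x : 'I_m) (b : bool) : in_R x (b%:R : S).
Proof.
case: b; last exact: inR0.
by move=> u; rewrite msupp1 mem_seq1 => /eqP ->; rewrite mnm0E.
Qed.

Lemma inR_sum (x : 'I_m) (I : eqType) (r : seq I) (P : pred I) (E : I -> S) :
  (forall i, i \in r -> P i -> in_R x (E i)) -> in_R x (\sum_(i <- r | P i) E i).
Proof.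
elim: r => [|b r IH] h; first by rewrite big_nil; apply: inR0.
rewrite big_cons; have hr : forall i, i \in r -> P i -> in_R x (E i).
  by move=> i ir; apply: h; rewrite in_cons ir orbT.
case: ifP => Pb; last exact: IH.
by apply: inRD; [apply: h; rewrite ?mem_head | exact: IH].
Qed.

Section Ideal.
Variable G : seq S.
Local Notation I := (in_ideal G).

Lemma idl0 : I 0.
Proof. by exists (fun _ => 0); rewrite big1 // => i _; rewrite mul0r. Qed.

Lemma idlD f g : I f -> I g -> I (f + g).
Proof.
move=> [c ->] [d ->]; exists (fun i => c i + d i).
by rewrite -big_split; apply: eq_bigr => i _; rewrite mulrDl.
Qed.

Lemma idlM r f : I f -> I (r * f).
Proof.
move=> [c ->]; exists (fun i => r * c i).
by rewrite mulr_sumr; apply: eq_bigr => i _; rewrite mulrA.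
Qed.

Lemma idlN f : I f -> I (- f).
Proof. by move=> h; rewrite -mulN1r; apply: idlM. Qed.

Lemma idl_big (J : Type) (r : seq J) (P : pred J) (E : J -> S) :
  (forall i, P i -> I (E i)) -> I (\sum_(i <- r | P i) E i).
Proof. by apply: (big_ind (fun f => I f)); [apply: idl0 | apply: idlD]. Qed.

Lemma idl_mem (i : 'I_(size G)) : I G`_i.
Proof.
exists (fun j => (j == i)%:R); rewrite (bigD1 i) //= eqxx mul1r big1 ?addr0 //.
by move=> j /negbTE ->; rewrite mul0r.
Qed.
End Ideal.

Lemma mon_coef (gens : seq 'X_{1..m}) (f : S) g :
  mon_ideal gens f -> f@_g != 0 -> has (fun u => (u <= g)%MM) gens.
Proof.
case=> c -> nz; rewrite raddf_sum /= in nz.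
case: (boolP [exists i, (c i * [seq ('X_[u] : S) | u <- gens]`_i)@_g != 0]);
  last first.
  move/existsPn => h; rewrite big1 ?eqxx // in nz.
  by move=> i _; apply/eqP; have := h i; rewrite negbK.
move/existsP => [i hi]; have ilt : (i < size gens)%N by rewrite -(size_map (fun u => ('X_[u] : S))).
rewrite (nth_map 0%MM) // -mcoeff_msupp (perm_mem (msuppMX _ _)) in hi.
case/mapP: hi => u _ ->; apply/hasP; exists (nth 0%MM gens i); first exact: mem_nth.
exact: lem_addr.
Qed.

Lemma mon_has (gens : seq 'X_{1..m}) g :
  has (fun u => (u <= g)%MM) gens -> mon_ideal gens ('X_[g] : S).
Proof.
case/hasP => u uin le; rewrite -(submK le) mpolyXD; apply: idlM.
have ilt : (index u gens < size [seq ('X_[u] : S) | u <- gens])%N by rewrite size_map index_mem.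
have := @idl_mem _ (Ordinal ilt); rewrite /= (nth_map 0%MM) ?nth_index //.
by rewrite -(size_map (fun u => ('X_[u] : S))).
Qed.

Lemma exists_min (J : S -> Prop) b : J 'X_[b] ->
  exists u, (u <= b)%MM /\ min_mon_gen J u.
Proof.
suff H : forall d b, (mdeg b < d)%N -> J 'X_[b] ->
  exists u, (u <= b)%MM /\ min_mon_gen J u by apply: H (ltnSn _).
clear b; elim=> [|d IH] b hd hJ; first by rewrite ltn0 in hd.
case: (classic (exists v, (v <= b)%MM /\ J 'X_[v] /\ v <> b)).
  case=> v [lvb [Jv nvb]].
  have ltd : (mdeg v < d)%N.
    have : (0 < mdeg (b - v)%MM)%N.
      by rewrite lt0n mdeg_eq0; apply/eqP => h; apply: nvb; rewrite -(submK lvb) h add0m.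
    have e := mdegD (b - v) v; rewrite submK // in e; lia.
  have [u [luv mu]] := IH v ltd Jv; exists u; split => //.
  move/mnm_lepP: luv => h1; move/mnm_lepP: lvb => h2.
  by apply/mnm_lepP => i; exact: leq_trans (h1 i) (h2 i).
move=> nex; exists b; split; first by apply/mnm_lepP.
split => // v lvb Jv; apply: NNPP => nvb; apply: nex; by exists v.
Qed.

Section Colspan.
Variables (x : 'I_m) (n c : nat) (M : 'M[S]_(n, c)).
Local Notation CS := (R_colspan x M).

Lemma CS0 : CS 0.
Proof. by exists 0; rewrite mulmx0; split => // j; rewrite mxE; apply: inR0. Qed.

Lemma CSD v1 v2 : CS v1 -> CS v2 -> CS (v1 + v2).
Proof.
move=> [w1 [h1 ->]] [w2 [h2 ->]]; exists (w1 + w2); rewrite mulmxDr; split => //.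
by move=> j; rewrite mxE; apply: inRD.
Qed.

Lemma CSZ r v : in_R x r -> CS v -> CS (r *: v).
Proof.
move=> hr [w [h ->]]; exists (r *: w); rewrite scalemxAr; split => //.
by move=> j; rewrite mxE; apply: inRM.
Qed.

Lemma CS_big (J : Type) (s : seq J) (P : pred J) (E : J -> 'cV[S]_n) :
  (forall i, P i -> CS (E i)) -> CS (\sum_(i <- s | P i) E i).
Proof. by apply: (big_ind (fun f => CS f)); [apply: CS0 | apply: CSD]. Qed.

Lemma CS_col j : CS (col j M).
Proof.
exists (delta_mx j 0); rewrite colE; split => // i; rewrite mxE; exact: inRnat.
Qed.
End Colspan.

End Aux.
End Aux.
Import Aux.
Unset Implicit Arguments.

Theorem theorem3p4 (k : fieldType) (m : nat) (x : 'I_m)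
    (gens : seq 'X_{1..m}) (hsq : squarefree_gens gens)
    (n : nat) (F : 'I_n -> 'X_{1..m}) (hFinj : injective F)
    (hF : forall u : 'X_{1..m},
        (min_mon_gen (@mon_ideal k m gens) u /\ (0 < u x)%N) <->
        exists i, u = (U_(x) + F i)%MM)
    (a : nat) (N : 'M[{mpoly k[m]}]_(n, a))
    (blk : 'I_a -> 'I_n) (gen : 'I_a -> 'X_{1..m})
    (hN : N = \matrix_(i < n, j < a) (if i == blk j then 'X_[gen j] else 0))
    (hblk_mono : forall j1 j2 : 'I_a, (j1 <= j2)%N -> (blk j1 <= blk j2)%N)
    (hgen_inj : forall j1 j2 : 'I_a, blk j1 = blk j2 -> gen j1 = gen j2 -> j1 = j2)
    (hgen : forall (i : 'I_n) (u : 'X_{1..m}),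
        min_mon_gen (image_mod_x x (colon (@mon_ideal k m gens) 'X_[F i])) u <->
        exists j, blk j = i /\ gen j = u)
    (p : nat) (P : 'M[{mpoly k[m]}]_(n, p))
    (hPR : forall i j, in_R x (P i j))
    (hPsyz : forall j, \sum_i P i j * 'X_[F i] = 0)
    (hPgen : forall v : 'cV[{mpoly k[m]}]_n, (forall i, in_R x (v i 0)) ->
        \sum_i v i 0 * 'X_[F i] = 0 -> R_colspan x P v)
    (hPmin : forall j0 : 'I_p, ~ exists w : 'I_p -> {mpoly k[m]},
        (forall j, in_R x (w j)) /\
        forall i, P i j0 = \sum_(j < p | j != j0) P i j * w j) :
  presentation_matrix x (@mon_ideal k m gens) F (row_mx N P).
Proof.
subst N.
set I := mon_ideal gens.
set M := row_mx _ P.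
have genR : forall j, gen j x = 0%N.
  move=> j; have hm : min_mon_gen (image_mod_x x (colon I 'X_[F (blk j)])) (gen j).
    by apply/(hgen (blk j) (gen j)); exists j.
  case: hm => [[hJ _] _].
  by apply: (hJ (gen j)); rewrite msuppX mem_seq1.
have xFI : forall i, I ('X_x * 'X_[F i]).
  move=> i; rewrite -mpolyXD; have hm : min_mon_gen I (U_(x) + F i)%MM /\ (0 < (U_(x) + F i)%MM x)%N.
    by apply/hF; exists i.
  by case: hm => [[h _] _].
have MR : forall i j, in_R x (M i j).
  move=> i j; rewrite /M -(splitK j); case: (split j) => j' /=.
    by rewrite row_mxEl mxE; case: ifP => _; [apply: inRX; apply: genR | apply: inR0].
  by rewrite row_mxEr; apply: hPR.
split => // v vR; split; last first.
  case=> w [wR ->].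
  have -> : \sum_i (M *m w) i 0 * 'X_[F i] = \sum_j w j 0 * (\sum_i M i j * 'X_[F i]).
    under eq_bigr => i _ do rewrite mxE big_distrl.
    rewrite exchange_big; apply: eq_bigr => j _; rewrite mulr_sumr.
    by apply: eq_bigr => i _; rewrite /= mulrAC mulrC.
  apply: idl_big => j _; apply: idlM.
  rewrite /M -(splitK j); case: (split j) => j' /=; last first.
    under eq_bigr => i _ do rewrite row_mxEr.
    by rewrite hPsyz; apply: idl0.
  under eq_bigr => i _ do rewrite row_mxEl mxE.
  rewrite (bigD1 (blk j')) //= eqxx big1 ?addr0; last first.
    by move=> i /negbTE ->; rewrite mul0r.
  have hm : min_mon_gen (image_mod_x x (colon I 'X_[F (blk j')])) (gen j').
    by apply/(hgen (blk j') (gen j')); exists j'.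
  case: hm => [[_ [g [h [hg ->]]]] _].
  rewrite mulrDl -mulrA; apply: idlD; [exact: hg | apply: idlM; exact: xFI].
move=> hI.
pose good i b := has (fun u => (u <= b + F i)%MM) gens.
pose v1 := \col_i (\sum_(b <- msupp (v i 0) | good i b) (v i 0)@_b *: 'X_[b]).
have v1R : forall i, in_R x (v1 i 0).
  move=> i; rewrite mxE; apply: inR_sum => b hb _; apply: inRZ; apply: inRX; exact: (vR i b hb).
have v2R : forall i, in_R x ((v - v1) i 0).
  move=> i; rewrite !mxE; apply: inRD => //; apply: inRN; by have := v1R i; rewrite mxE.
suff: R_colspan x M (v1 + (v - v1)) by rewrite addrC subrK.
apply: CSD.
  have -> : v1 = \sum_i \sum_(b <- msupp (v i 0) | good i b)
      ((v i 0)@_b *: 'X_[b]) *: delta_mx i 0.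
    apply/matrixP => i0 j0; rewrite (ord1 j0) summxE (bigD1 i0) //= [X in _ + X]big1 ?addr0.
      rewrite mxE summxE; apply: eq_bigr => b _; by rewrite !mxE !eqxx mulr1.
    move=> i ni; rewrite summxE big1 // => b _; rewrite !mxE.
    by rewrite eq_sym (negbTE ni) mulr0.
  apply: CS_big => i _; rewrite big_seq_cond; apply: CS_big => b /andP [bin gb].
  have Jb : image_mod_x x (colon I 'X_[F i]) 'X_[b].
    split; first by apply: inRX; exact: (vR i b bin).
    exists 'X_[b], 0; split; last by rewrite mul0r addr0.
    by rewrite /colon -mpolyXD; apply: mon_has.
  have [u [lub mu]] := exists_min Jb.
  have [j [bj gj]] := (hgen i u).1 mu.
  have -> : ((v i 0)@_b *: 'X_[b]) *: delta_mx i 0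
      = ((v i 0)@_b *: 'X_[b - u]) *: col (lshift p j) M.
    rewrite -col_lsubmx /M row_mxKl; apply/matrixP => i0 j0; rewrite !mxE (ord1 j0) /= bj gj eqxx andbT.
    case: (i0 == i); rewrite ?mulr1 ?mulr0 //.
    by rewrite -scalerAl -mpolyXD submK.
  apply: CSZ; last exact: CS_col.
  apply: inRZ; apply: inRX; by rewrite mnmBE (vR _ _ bin).
have hsyz : \sum_i (v - v1) i 0 * 'X_[F i] = 0.
  set f := \sum_i (v - v1) i 0 * 'X_[F i].
  have fI : I f.
    have -> : f = \sum_i v i 0 * 'X_[F i] - \sum_i v1 i 0 * 'X_[F i].
      by rewrite /f -sumrB; apply: eq_bigr => i _; rewrite [(v - v1) i 0]mxE [(- v1) i 0]mxE mulrBl.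
    apply: idlD => //; apply: idlN; apply: idl_big => i _.
    rewrite mxE big_distrl /=; apply: idl_big => b gb.
    by rewrite -scalerAl -mpolyXD -mul_mpolyC; apply: idlM; apply: mon_has.
  have fE : forall i, (v - v1) i 0
      = \sum_(b <- msupp (v i 0) | ~~ good i b) (v i 0)@_b *: 'X_[b].
    move=> i; rewrite [(v - v1) i 0]mxE [(- v1) i 0]mxE mxE.
    set s := (\sum_(b <- _ | good i b) _).
    by rewrite {1}(mpolyE (v i 0)) (bigID (good i)) /= addrAC subrr add0r.
  apply/mpolyP => g; rewrite raddf0; case: (eqVneq (f@_g) 0) => // nz.
  have hg := mon_coef fI nz.
  exfalso; move/eqP: nz; apply.
  rewrite /f raddf_sum big1 // => i _.
  rewrite fE big_distrl raddf_sum /=; apply: big1_seq => b /andP [ngb _].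
  rewrite -scalerAl -mpolyXD mcoeffZ mcoeffX; case: eqP => [e|_]; last by rewrite mulr0.
  by move: ngb; rewrite /good e hg.
have [w [wR ew]] := hPgen _ v2R hsyz.
exists (col_mx 0 w); split.
  move=> j; rewrite -(splitK j); case: (split j) => j' /=.
    by rewrite col_mxEu mxE; exact: inR0.
  by rewrite col_mxEd; exact: wR.
by rewrite /M mul_row_col mulmx0 add0r.
Qed.
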